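(* Let $d\geq 1$ and let $\mu$ be a probability distribution on $Q_d$ such that $w_i^0>\frac12$ for every $i\in[d]$. If $(A,B)$ with $A,B\in Q_d$ is an equilibrium, then $A=B=\mathbf 0$. Consequently an equilibrium exists if and only if $(\mathbf 0,\mathbf 0)$ is an equilibrium, i.e. if and only if $P_1(X,\mathbf 0)\le \frac12$ for all $X\in Q_d$.
   Context: $Q_d=\{0,1\}^d$ with the Hamming distance $d(X,Y)=|\{i: x_i\neq y_i\}|$. A probability distribution on $Q_d$ is a function $\mu:Q_d\to\mathbb R_{\ge0}$ with $\sum_{V\in Q_d}\mu(V)=1$, extended to subsets by $\mu(\mathcal A)=\sum_{V\in\mathcal A}\mu(V)$. For $A,B\in Q_d$ let $V(A,B)=\{X\in Q_d: d(X,A)<d(X,B)\}$ and $T(A,B)=\{X\in Q_d: d(X,A)=d(X,B)\}$. The payoffs in position $(A,B)$ (Player 1 at $A$, Player 2 at $B$) are $P_1(A,B)=\mu(V(A,B))+\frac12\mu(T(A,B))$ and $P_2(A,B)=\mu(V(B,A))+\frac12\mu(T(A,B))$. The pair $(A,B)$ is an equilibrium if $P_1(A,B)\ge P_1(A',B)$ for all $A'\in Q_d$ and $P_2(A,B)\ge P_2(A,B')$ for all $B'\in Q_d$. For $i\in[d]$, $w_i^0=\mu(\{X\in Q_d: x_i=0\})$. $\mathbf 0=(0,\dots,0)$. *)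

(* Defs.v *)
From mathcomp Require Import all_boot all_order all_algebra.
Set Implicit Arguments. Unset Strict Implicit. Unset Printing Implicit Defensive.
Import Order.TTheory GRing.Theory Num.Theory.
Local Open Scope ring_scope.

(* The hypercube Q_d = {0,1}^d, a point is a function 'I_d -> bool (false = 0, true = 1). *)
Definition cube (d : nat) := {ffun 'I_d -> bool}.

Definition hamming d (X Y : cube d) : nat := #|[set i | X i != Y i]|.

Definition zero_pt d : cube d := [ffun _ => false].

Section Game.
Variables (R : realFieldType) (d : nat) (mu : {ffun cube d -> R}).

Definition is_distribution : Prop :=
  (forall V, 0 <= mu V) /\ \sum_(V : cube d) mu V = 1.

Definition mass (S : {set cube d}) : R := \sum_(V in S) mu V.

Definition Vor (A B : cube d) : {set cube d} :=
  [set X | (hamming X A < hamming X B)%N].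
Definition Tie (A B : cube d) : {set cube d} :=
  [set X | hamming X A == hamming X B].

Definition P1 (A B : cube d) : R := mass (Vor A B) + mass (Tie A B) / 2.
Definition P2 (A B : cube d) : R := mass (Vor B A) + mass (Tie A B) / 2.

Definition equilibrium (A B : cube d) : Prop :=
  (forall A', P1 A' B <= P1 A B) /\ (forall B', P2 A B' <= P2 A B).

Definition w0 (i : 'I_d) : R := mass [set X : cube d | ~~ X i].
End Game.

(* Main.v *)
Require Import Defs.
From mathcomp Require Import all_boot all_order all_algebra.
From mathcomp Require Import lra.
Import Order.TTheory GRing.Theory Num.Theory.
Local Open Scope ring_scope.

Section H.
Variables (R : realFieldType) (d : nat) (mu : {ffun cube d -> R}).

Lemma mass_ind S : mass mu S = \sum_V (if V \in S then mu V else 0).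
Proof. by rewrite /mass big_mkcond. Qed.

Lemma sum_parts (A B : cube d) : is_distribution mu ->
  mass mu (Vor A B) + mass mu (Vor B A) + mass mu (Tie A B) = 1.
Proof.
move=> [_ hs]; rewrite !mass_ind -!big_split /= -hs; apply: eq_bigr => V _.
rewrite !inE; case: (ltngtP (hamming V A) (hamming V B)) => h;
  rewrite ?addr0 ?add0r //.
Qed.

Lemma Tie_sym (A B : cube d) : Tie A B = Tie B A.
Proof. by apply/setP => X; rewrite !inE eq_sym. Qed.

Lemma P2_P1 (A B : cube d) : P2 mu A B = P1 mu B A.
Proof. by rewrite /P2 /P1 Tie_sym. Qed.

Lemma P1_diag (A : cube d) : is_distribution mu -> P1 mu A A = 1 / 2.
Proof.
move=> [_ hs]; rewrite /P1.
have -> : Vor A A = set0 by apply/setP => X; rewrite !inE ltnn.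
have -> : Tie A A = setT by apply/setP => X; rewrite !inE eqxx.
rewrite /mass big_set0.
have -> : \sum_(V in [set: cube d]) mu V = 1.
  by rewrite -hs; apply: eq_bigl => V; rewrite in_setT.
by rewrite add0r.
Qed.

Lemma P1_sum (A B : cube d) : is_distribution mu -> P1 mu A B + P2 mu A B = 1.
Proof. move=> hd; have := sum_parts A B hd; rewrite /P1 /P2; lra. Qed.

Definition flip (B : cube d) (i : 'I_d) : cube d :=
  [ffun j => if j == i then ~~ B i else B j].

Lemma ham_split (X Y : cube d) i :
  hamming X Y = ((X i != Y i) + #|[predD1 [set j | X j != Y j] & i]|)%N.
Proof. by rewrite /hamming (cardD1 i) inE. Qed.

Lemma P1_flip (B : cube d) i : P1 mu (flip B i) B = mass mu [set X : cube d | X i != B i].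
Proof.
rewrite /P1.
have E : forall X, #|[predD1 [set j | X j != flip B i j] & i]| =
                  #|[predD1 [set j | X j != B j] & i]|.
  move=> X; apply: eq_card => j; rewrite !inE /flip ffunE.
  by case: (j =P i) => //.
have -> : Vor (flip B i) B = [set X : cube d | X i != B i].
  apply/setP => X; rewrite !inE !(ham_split X _ i) E /flip ffunE eqxx ltn_add2r.
  by case: (X i); case: (B i).
have -> : Tie (flip B i) B = set0.
  apply/setP => X; rewrite !inE !(ham_split X _ i) E /flip ffunE eqxx eqn_add2r.
  by case: (X i); case: (B i).
by rewrite /mass big_set0 mul0r addr0.
Qed.

Lemma eq_zero (A B : cube d) : is_distribution mu -> (forall i : 'I_d, 1 / 2 < w0 mu i) ->
  equilibrium mu A B -> A = zero_pt d /\ B = zero_pt d.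
Proof.
move=> hd hw [h1 h2].
have hP1 : P1 mu A B <= 1/2.
  have := h2 A; rewrite P2_P1 P1_diag // => h; have := P1_sum A B hd; lra.
have hP2 : P2 mu A B <= 1/2.
  have := h1 B; rewrite P1_diag // => h; have := P1_sum A B hd; lra.
split; apply/ffunP => i; rewrite ffunE; apply/negbTE/negP => hi.
- have := h2 (flip A i); rewrite P2_P1 P1_flip.
  have -> : [set X : cube d | X i != A i] = [set X : cube d | ~~ X i].
    by apply/setP => X; rewrite !inE hi; case: (X i).
  have := hw i; rewrite /w0; lra.
- have := h1 (flip B i); rewrite P1_flip.
  have -> : [set X : cube d | X i != B i] = [set X : cube d | ~~ X i].
    by apply/setP => X; rewrite !inE hi; case: (X i).
  have := hw i; rewrite /w0; lra.
Qed.

End H.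

Theorem mainTheorem1 (R : realFieldType) (d : nat) (mu : {ffun cube d -> R}) :
  (1 <= d)%N ->
  is_distribution mu ->
  (forall i : 'I_d, 1 / 2 < w0 mu i) ->
  (forall A B : cube d, equilibrium mu A B -> A = zero_pt d /\ B = zero_pt d) /\
  ((exists A B : cube d, equilibrium mu A B) <-> equilibrium mu (zero_pt d) (zero_pt d)) /\
  (equilibrium mu (zero_pt d) (zero_pt d) <->
     forall X : cube d, P1 mu X (zero_pt d) <= 1 / 2).
Proof.
move=> _ hd hw; split; first by move=> A B; exact: eq_zero.
split.
  split; last by move=> h; exists (zero_pt d), (zero_pt d).
  by move=> [A [B h]]; have [eA eB] := @eq_zero R d mu A B hd hw h; rewrite eA eB in h.
split.
  by move=> [h1 _] X; rewrite -(@P1_diag R d mu (zero_pt d) hd); exact: h1.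
move=> h; split; rewrite ?P1_diag // => X; rewrite ?P2_P1 ?P1_diag //.
Qed.
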